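(* Let $M\ge1$ and let $x_{1:\infty}$ be an $M$-bounded displacement enumeration with respect to a language $K$, with arbitrary noise rate and possibly omissions. Then for any language $L\subseteq K$, $$\mu_{\rm low}(L,K)\ge\frac1M\liminf_{n\to\infty}\frac{|L\cap\{x_1,\dots,x_n\}|}{n},\qquad \mu_{\rm up}(L,K)\ge\frac1M\limsup_{n\to\infty}\frac{|L\cap\{x_1,\dots,x_n\}|}{n}.$$
   Context: The universe is $U=\mathbb{N}$ with its natural order; a language is an infinite subset of $U$, with canonical enumeration $\ell_1<\ell_2<\cdots$. For $A,B\subseteq\mathbb{N}$ with $B=\{b_1<b_2<\cdots\}$, $\mu_{\rm up}(A,B)=\limsup_n\frac1n|A\cap\{b_1,\dots,b_n\}|$ and $\mu_{\rm low}(A,B)=\liminf_n\frac1n|A\cap\{b_1,\dots,b_n\}|$. For $x\in U$, $\sigma(x,L)=j$ if $x=\ell_j$ and $0$ if $x\notin L$. A sequence $x_1,x_2,\dots$ of distinct elements of $U$ is an $M$-bounded displacement enumeration with respect to $L$ if there is $n^\star$ with $\sigma(x_n,L)\le Mn$ for all $n\ge n^\star$. *)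

(* Defs.v *)
From Stdlib Require Import Reals Lra Lia Arith List ClassicalEpsilon.
From Coquelicot Require Import Coquelicot.
Open Scope R_scope.

(* Subsets of U = nat are boolean predicates. *)
Definition language (A : nat -> bool) : Prop :=
  forall n : nat, exists m : nat, (n <= m)%nat /\ A m = true.

Definition subset (A B : nat -> bool) : Prop :=
  forall x, A x = true -> B x = true.

Definition count1 (f : nat -> bool) (n : nat) : nat :=
  length (filter f (seq 1 n)).

(* sigma(x, B) = j if x = b_j (1-indexed canonical enumeration), 0 if x notin B *)
Definition sigma (x : nat) (B : nat -> bool) : nat :=
  if B x then S (length (filter B (seq 0 x))) else 0%nat.

(* b_j : the j-th element (j >= 1) of B in increasing order *)
Definition enum_el (B : nat -> bool) (j : nat) : nat :=
  epsilon (inhabits 0%nat) (fun x => B x = true /\ sigma x B = j).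

Definition cnt_in_prefix (A B : nat -> bool) (n : nat) : nat :=
  count1 (fun j => A (enum_el B j)) n.

Definition ratio_seq (A B : nat -> bool) : nat -> R :=
  fun n => INR (cnt_in_prefix A B n) / INR n.

Definition mu_up (A B : nat -> bool) : Rbar := LimSup_seq (ratio_seq A B).
Definition mu_low (A B : nat -> bool) : Rbar := LimInf_seq (ratio_seq A B).

(* Enumerations x_1, x_2, ... are functions nat -> nat; index 0 is ignored. *)
Definition distinct_enum (x : nat -> nat) : Prop :=
  forall i j, (1 <= i)%nat -> (1 <= j)%nat -> x i = x j -> i = j.

Definition bounded_displacement (M : R) (x : nat -> nat) (L : nat -> bool) : Prop :=
  distinct_enum x /\
  exists nstar : nat, forall n : nat, (nstar <= n)%nat -> (1 <= n)%nat ->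
    INR (sigma (x n) L) <= M * INR n.

Definition enum_ratio (L : nat -> bool) (x : nat -> nat) : nat -> R :=
  fun n => INR (count1 (fun i => L (x i)) n) / INR n.

(* Main.v *)
Require Import Defs.
From Stdlib Require Import Reals Lra Lia Arith List ClassicalEpsilon Bool.
From Coquelicot Require Import Coquelicot.
Open Scope R_scope.
Lemma count1_le f n : (count1 f n <= n)%nat.
Proof. unfold count1. apply (Nat.le_trans _ _ _ (filter_length_le _ _)). rewrite length_seq; lia. Qed.

Lemma filter_split {A} (f g h : A -> bool) l :
  (forall i, f i = true -> g i = true \/ h i = true) ->
  (length (filter f l) <= length (filter g l) + length (filter h l))%nat.
Proof.
  intros H. induction l as [|a l IH]; simpl; auto.
  destruct (f a) eqn:Ef; destruct (g a) eqn:Eg; destruct (h a) eqn:Eh; simpl; try lia.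
  destruct (H a Ef); congruence.
Qed.

Lemma sigma_mono (K : nat -> bool) y z : (y < z)%nat -> K y = true ->
  (S (length (filter K (seq 0 y))) <= length (filter K (seq 0 z)))%nat.
Proof.
  intros Hyz Ky. replace z with (y + (S (z - y - 1)))%nat by lia.
  rewrite seq_app, filter_app, length_app. simpl. rewrite Ky. simpl. lia.
Qed.

Lemma sigma_inj (K : nat -> bool) y z : K y = true -> K z = true ->
  Defs.sigma y K = Defs.sigma z K -> y = z.
Proof.
  unfold Defs.sigma. intros Ky Kz. rewrite Ky, Kz. intros E.
  destruct (Nat.lt_trichotomy y z) as [H|[H|H]]; auto.
  - pose proof (sigma_mono K y z H Ky). lia.
  - pose proof (sigma_mono K z y H Kz). lia.
Qed.

Lemma enum_el_sigma (K : nat -> bool) y : K y = true -> enum_el K (Defs.sigma y K) = y.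
Proof.
  intros Ky. unfold enum_el.
  destruct (epsilon_spec (inhabits 0%nat) (fun x => K x = true /\ Defs.sigma x K = Defs.sigma y K)) as [H1 H2].
  { exists y. auto. }
  apply (sigma_inj K); auto.
Qed.

Lemma comb (M : R) (x : nat -> nat) (K L : nat -> bool) (nstar n m : nat) :
  subset L K -> distinct_enum x ->
  (forall n : nat, (nstar <= n)%nat -> (1 <= n)%nat -> INR (Defs.sigma (x n) K) <= M * INR n) ->
  M * INR n <= INR m ->
  (count1 (fun i => L (x i)) n <= cnt_in_prefix L K m + nstar)%nat.
Proof.
  intros HLK Hd Hb Hnm. unfold count1, cnt_in_prefix.
  set (P := fun i => (nstar <=? i)%nat && L (x i)).
  eapply Nat.le_trans.
  { apply (filter_split _ P (fun i => i <? nstar)%nat).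
    intros i Hi. unfold P. rewrite Hi. destruct (Nat.leb_spec nstar i); destruct (Nat.ltb_spec i nstar); auto; lia. }
  apply Nat.add_le_mono.
  - set (g := fun i => Defs.sigma (x i) K).
    rewrite <- (length_map g).
    apply NoDup_incl_length.
    + apply NoDup_map_NoDup_ForallPairs.
      * intros i j Hi Hj E. unfold g in E.
        apply filter_In in Hi, Hj. destruct Hi as [Hi Pi], Hj as [Hj Pj].
        unfold P in Pi, Pj. apply andb_true_iff in Pi, Pj.
        apply in_seq in Hi, Hj.
        apply Hd; try lia. apply (sigma_inj K); auto; apply HLK; tauto.
      * apply NoDup_filter, seq_NoDup.
    + intros j Hj. apply in_map_iff in Hj. destruct Hj as [i [Ei Hi]].
      apply filter_In in Hi. destruct Hi as [Hi Pi]. unfold P in Pi.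
      apply andb_true_iff in Pi. destruct Pi as [Pi1 Pi2]. apply Nat.leb_le in Pi1.
      apply in_seq in Hi. subst j. unfold g.
      assert (Kx : K (x i) = true) by (apply HLK; auto).
      apply filter_In. split.
      * apply in_seq. split.
        { unfold Defs.sigma. rewrite Kx. lia. }
        { assert (INR (Defs.sigma (x i) K) <= M * INR i) by (apply Hb; lia).
          assert (0 <= INR (Defs.sigma (x i) K)) by apply pos_INR.
          assert (M * INR i <= M * INR n).
          { destruct (Rle_or_lt 0 M).
            - apply Rmult_le_compat_l; auto. apply le_INR; lia.
            - exfalso. assert (0 < INR i) by (apply lt_0_INR; lia). nra. }
          assert (Defs.sigma (x i) K <= m)%nat by (apply INR_le; lra). lia. }
      * rewrite enum_el_sigma; auto.
  - apply (Nat.le_trans _ (length (seq 0 nstar))); [|rewrite length_seq; lia].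
    apply NoDup_incl_length. apply NoDup_filter, seq_NoDup.
    intros i Hi. apply filter_In in Hi. destruct Hi as [_ Hi]. apply Nat.ltb_lt in Hi.
    apply in_seq. lia.
Qed.
Lemma le_eps (x y : R) : (forall eps, 0 < eps -> x <= y + 3 * eps) -> x <= y.
Proof. intros H. destruct (Rle_or_lt x y); auto. specialize (H ((x-y)/6)). lra. Qed.

Lemma big_nat (r : R) : exists N : nat, r < INR N.
Proof.
  destruct (Rle_or_lt 0 r) as [H|H].
  - destruct (nfloor_ex r H) as [k Hk]. exists (S k). rewrite S_INR. lra.
  - exists 0%nat. simpl. lra.
Qed.

Lemma liminf_fin (u : nat -> R) : (forall n, 0 <= u n <= 1) ->
  exists l, LimInf_seq u = Finite l /\ is_LimInf_seq u l /\ 0 <= l <= 1.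
Proof.
  intros Hu. destruct (ex_LimInf_seq u) as [l Hl].
  assert (H1 : Rbar_le (LimInf_seq (fun _ => 0)) (LimInf_seq u)).
  { apply LimInf_le. exists 0%nat. intros n _. apply Hu. }
  assert (H2 : Rbar_le (LimSup_seq u) (LimSup_seq (fun _ => 1))).
  { apply LimSup_le. exists 0%nat. intros n _. apply Hu. }
  pose proof (LimSup_LimInf_seq_le u) as H3.
  rewrite LimInf_seq_const in H1. rewrite LimSup_seq_const in H2.
  rewrite (is_LimInf_seq_unique _ _ Hl) in *.
  destruct (LimSup_seq u) as [s| |]; destruct l as [l| |]; simpl in *; try tauto.
  exists l. split; [reflexivity|split; [exact Hl|lra]].
Qed.

Lemma limsup_fin (u : nat -> R) : (forall n, 0 <= u n <= 1) ->
  exists l, LimSup_seq u = Finite l /\ is_LimSup_seq u l /\ 0 <= l <= 1.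
Proof.
  intros Hu. destruct (ex_LimSup_seq u) as [l Hl].
  assert (H1 : Rbar_le (LimInf_seq (fun _ => 0)) (LimInf_seq u)).
  { apply LimInf_le. exists 0%nat. intros n _. apply Hu. }
  assert (H2 : Rbar_le (LimSup_seq u) (LimSup_seq (fun _ => 1))).
  { apply LimSup_le. exists 0%nat. intros n _. apply Hu. }
  pose proof (LimSup_LimInf_seq_le u) as H3.
  rewrite LimInf_seq_const in H1. rewrite LimSup_seq_const in H2.
  rewrite (is_LimSup_seq_unique _ _ Hl) in *.
  destruct (LimInf_seq u) as [s| |]; destruct l as [l| |]; simpl in *; try tauto.
  exists l. split; [reflexivity|split; [exact Hl|lra]].
Qed.










Lemma anal_inf (a b : nat -> R) (M s : R)
  (Ha : forall n, 0 <= a n <= 1) (Hb : forall n, 0 <= b n <= 1) (HM : 1 <= M) (Hs : 0 <= s)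
  (HP : forall n m : nat, (1 <= n)%nat -> (1 <= m)%nat -> M * INR n <= INR m ->
  INR n * a n - s <= INR m * b m) : Rbar_le (Rbar_mult (Finite (/ M)) (LimInf_seq a)) (LimInf_seq b).
Proof.
  destruct (liminf_fin a Ha) as [la [E1 [H1 B1]]].
  destruct (liminf_fin b Hb) as [lb [E2 [H2 B2]]].
  rewrite E1, E2. simpl.
  set (r := / M).
  assert (Hr : 0 < r <= 1). { unfold r. split. apply Rinv_0_lt_compat; lra.
    rewrite <- Rinv_1. apply Rinv_le_contravar; lra. }
  assert (HMr : M * r = 1). { unfold r. field. lra. }
  apply le_eps. intros eps He.
  destruct (Rle_or_lt la eps) as [Hle|Hlt].
  { nra. }
  set (A := la - eps).
  destruct (H1 (mkposreal eps He)) as [_ [N1 HN1]]. simpl in HN1.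
  destruct (big_nat (M * (INR N1 + 1) + (A + s) / eps)) as [N HN].
  assert (0 <= (A + s) / eps). { apply Rdiv_le_0_compat; unfold A; lra. }
  assert (0 <= INR N1) by apply pos_INR.
  assert (0 <= M * (INR N1 + 1)) by nra.
  destruct (proj1 (H2 (mkposreal eps He)) N) as [m [HmN Hm]]. simpl in Hm.
  apply le_INR in HmN.
  assert (Hmpos : 0 <= INR m / M). { apply Rdiv_le_0_compat; [apply pos_INR|lra]. }
  destruct (nfloor_ex _ Hmpos) as [n Hn].
  assert (Hmr : INR m / M = INR m * r) by reflexivity.
  rewrite Hmr in Hn.
  assert (HnN1 : INR N1 < INR n).
  { assert (M * (INR N1 + 1) < INR m) by lra.
    assert (INR N1 + 1 < INR m * r).
    { replace (INR N1 + 1) with (M * (INR N1 + 1) * r) by (rewrite Rmult_assoc, (Rmult_comm _ r), <- Rmult_assoc, HMr; ring).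
      apply Rmult_lt_compat_r; lra. }
    lra. }
  apply INR_lt in HnN1.
  assert (Hm1 : (1 <= m)%nat).
  { apply INR_le. simpl. nra. }
  assert (HMn : M * INR n <= INR m).
  { replace (INR m) with (M * (INR m * r)) by (rewrite <- Rmult_assoc, (Rmult_comm M), Rmult_assoc, HMr; ring).
    apply Rmult_le_compat_l; lra. }
  specialize (HP n m ltac:(lia) Hm1 HMn).
  specialize (HN1 n ltac:(lia)).
  assert (Han : A < a n) by (unfold A; lra).
  assert (HApos : 0 < A) by (unfold A; lra).
  assert (Hmeps : A + s < INR m * eps).
  { assert (Hq : (A + s) / eps < INR m) by lra.
    apply (Rmult_lt_compat_r eps) in Hq; auto.
    unfold Rdiv in Hq. rewrite Rmult_assoc, Rinv_l in Hq by lra. lra. }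
  (* INR m * b m >= n*A - s > (m r - 1) A - s *)
  assert (INR m * b m > INR m * (r * A - eps)).
  { assert (INR n * a n >= INR n * A). { apply Rle_ge, Rmult_le_compat_l; [apply pos_INR|lra]. }
    assert (INR n * A > (INR m * r - 1) * A) by (apply Rmult_gt_compat_r; lra).
    nra. }
  assert (0 < INR m). { assert (1 <= M * (INR N1 + 1)) by nra. lra. }
  assert (b m > r * A - eps) by nra.
  unfold A in *. nra.
Qed.

Lemma anal_sup (a b : nat -> R) (M s : R)
  (Ha : forall n, 0 <= a n <= 1) (Hb : forall n, 0 <= b n <= 1) (HM : 1 <= M) (Hs : 0 <= s)
  (HP : forall n m : nat, (1 <= n)%nat -> (1 <= m)%nat -> M * INR n <= INR m ->
  INR n * a n - s <= INR m * b m) : Rbar_le (Rbar_mult (Finite (/ M)) (LimSup_seq a)) (LimSup_seq b).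
Proof.
  destruct (limsup_fin a Ha) as [la [E1 [H1 B1]]].
  destruct (limsup_fin b Hb) as [lb [E2 [H2 B2]]].
  rewrite E1, E2. simpl.
  set (r := / M).
  assert (Hr : 0 < r <= 1). { unfold r. split. apply Rinv_0_lt_compat; lra.
    rewrite <- Rinv_1. apply Rinv_le_contravar; lra. }
  assert (HMr : M * r = 1). { unfold r. field. lra. }
  apply le_eps. intros eps He.
  destruct (Rle_or_lt la eps) as [Hle|Hlt].
  { nra. }
  set (A := la - eps).
  assert (HApos : 0 < A) by (unfold A; lra).
  destruct (H2 (mkposreal eps He)) as [_ [N2 HN2]]. simpl in HN2.
  destruct (big_nat ((A * r + s) / eps)) as [N3 HN3].
  destruct (proj1 (H1 (mkposreal eps He)) (N2 + N3 + 1)%nat) as [n [HnN Hn]]. simpl in Hn.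
  assert (HMn : 0 <= M * INR n) by (apply Rmult_le_pos; [lra|apply pos_INR]).
  destruct (nfloor_ex _ HMn) as [k Hk].
  set (m := S k).
  assert (Hm : M * INR n < INR m /\ INR m <= M * INR n + 1) by (unfold m; rewrite S_INR; lra).
  assert (Hnm : INR n <= INR m). { assert (INR n <= M * INR n) by (pose proof (pos_INR n); nra). lra. }
  apply INR_le in Hnm.
  specialize (HP n m ltac:(lia) ltac:(unfold m; lia) ltac:(lra)).
  specialize (HN2 m ltac:(lia)).
  assert (Han : A < a n) by (unfold A; lra).
  assert (HN3' : INR N3 <= INR m) by (apply le_INR; lia).
  assert (Hmeps : A * r + s < INR m * eps).
  { assert (Hq : (A * r + s) / eps < INR m) by lra.
    apply (Rmult_lt_compat_r eps) in Hq; auto.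
    unfold Rdiv in Hq. rewrite Rmult_assoc, Rinv_l in Hq by lra. lra. }
  assert (0 < INR m) by (pose proof (pos_INR n); nra).
  assert (INR n * a n >= INR n * A). { apply Rle_ge, Rmult_le_compat_l; [apply pos_INR|lra]. }
  assert (INR m * (A * r) <= (M * INR n + 1) * (A * r)) by (apply Rmult_le_compat_r; nra).
  assert ((M * INR n + 1) * (A * r) = INR n * A + A * r).
  { replace ((M * INR n + 1) * (A * r)) with ((M * r) * INR n * A + A * r) by ring. rewrite HMr. ring. }
  assert (INR m * b m > INR m * (A * r - eps)) by nra.
  assert (b m > A * r - eps) by nra.
  unfold A in *. nra.
Qed.


Lemma ratio_bound (f : nat -> bool) n : 0 <= INR (count1 f n) / INR n <= 1.
Proof.
  destruct n as [|n].
  - simpl. unfold Rdiv. rewrite Rmult_0_l. lra.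
  - pose proof (count1_le f (S n)) as H. apply le_INR in H.
    assert (0 < INR (S n)) by (apply lt_0_INR; lia).
    pose proof (pos_INR (count1 f (S n))).
    split.
    + apply Rdiv_le_0_compat; lra.
    + apply (Rmult_le_reg_r (INR (S n))); auto. unfold Rdiv. rewrite Rmult_assoc, Rinv_l by lra. lra.
Qed.

Theorem lemma7p6 (M : R) (x : nat -> nat) (K L : nat -> bool) :
  1 <= M ->
  language K -> language L -> subset L K ->
  bounded_displacement M x K ->
  Rbar_le (Rbar_mult (Finite (/ M)) (LimInf_seq (enum_ratio L x))) (mu_low L K) /\
  Rbar_le (Rbar_mult (Finite (/ M)) (LimSup_seq (enum_ratio L x))) (mu_up L K).
Proof.
  intros HM _ _ HLK [Hd [nstar Hb]].
  assert (Ha : forall n, 0 <= enum_ratio L x n <= 1) by (intros; apply ratio_bound).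
  assert (Hb' : forall n, 0 <= ratio_seq L K n <= 1) by (intros; apply ratio_bound).
  assert (Hs : 0 <= INR nstar) by apply pos_INR.
  assert (HP : forall n m : nat, (1 <= n)%nat -> (1 <= m)%nat -> M * INR n <= INR m ->
    INR n * enum_ratio L x n - INR nstar <= INR m * ratio_seq L K m).
  { intros n m Hn Hm Hnm. unfold enum_ratio, ratio_seq.
    pose proof (comb M x K L nstar n m HLK Hd Hb Hnm) as C.
    apply le_INR in C. rewrite plus_INR in C.
    assert (0 < INR n) by (apply lt_0_INR; lia).
    assert (0 < INR m) by (apply lt_0_INR; lia).
    replace (INR n * (INR (count1 (fun i => L (x i)) n) / INR n)) with (INR (count1 (fun i => L (x i)) n)) by (field; lra).
    replace (INR m * (INR (cnt_in_prefix L K m) / INR m)) with (INR (cnt_in_prefix L K m)) by (field; lra).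
    lra. }
  unfold mu_low, mu_up. split.
  - exact (anal_inf _ _ M _ Ha Hb' HM Hs HP).
  - exact (anal_sup _ _ M _ Ha Hb' HM Hs HP).
Qed.
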